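(* Let $k,N\ge0$ and $g\in\mathcal M(k)$. The quadratic form $h\mapsto Q_{A,2}(gh)$ on $V_N$ has polar rank at least $\max\{0,N-k-m+1\}$. Consequently, with $n=k+N$ and any non-trivial additive character $\psi$, \[ \Bigl|\sum_{h\in\mathcal M(N)}\psi(Q_A(gh))\Bigr|\ll_A q^{N-\max(0,N-k-m)/2}, \] with implied constant depending only on $q$ and $A$, uniformly in $\ell_n$ and $\psi$.
   Context: $q$ is an odd prime power; fix $m\ge0$, $c_0,\dots,c_m\in\mathbb F_q$ with $c_m\ne0$, $A(z)=c_0+\tfrac12\sum_{\ell=1}^m c_\ell(z^\ell+z^{-\ell})$. $Q_{A,2}(f)=\operatorname{CT}\,A(z)f(z)f(z^{-1})=\sum_{j=0}^m c_j\sum_{i\ge j}f_if_{i-j}$. For each $n$, $\ell_n$ is an arbitrary linear form in the coefficients $f_0,\dots,f_n$, and for $f$ of degree $n$, $Q_A(f)=Q_{A,2}(f)+\ell_n(f)$. $\mathcal M(k)$ is the set of monic polynomials of degree $k$, $V_N$ the space of polynomials of degree $\le N$. Polar rank is the rank of $(x,y)\mapsto Q(x+y)-Q(x)-Q(y)$. *)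

(* Defs.v *)
From mathcomp Require Import all_boot all_order all_algebra all_field.
Set Implicit Arguments. Unset Strict Implicit. Unset Printing Implicit Defensive.
Import Order.TTheory GRing.Theory Num.Theory.
Local Open Scope ring_scope.

(* A(z) = c_0 + 1/2 sum_{l=1}^m c_l (z^l + z^-l), coefficients c : 'I_m.+1 -> F.
   Q_{A,2}(f) = sum_{j=0}^m c_j sum_{i >= j} f_i f_{i-j}. *)
Definition QA2 (F : fieldType) (m : nat) (c : 'I_m.+1 -> F) (f : {poly F}) : F :=
  \sum_(j < m.+1) c j * \sum_(j <= i < size f) f`_i * f`_(i - j).

Definition QA (F : fieldType) (m : nat) (c : 'I_m.+1 -> F) (n : nat)
    (l : nat -> F) (f : {poly F}) : F :=
  QA2 c f + \sum_(i < n.+1) l i * f`_i.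

Definition polar (F : fieldType) (V : zmodType) (Q : V -> F) (x y : V) : F :=
  Q (x + y) - Q x - Q y.

Definition polar_rank_VN (F : fieldType) (N : nat) (Q : {poly F} -> F) : nat :=
  \rank (\matrix_(i < N.+1, j < N.+1) polar Q 'X^i 'X^j).

Definition nontriv_add_char (F : fieldType) (psi : F -> algC) : Prop :=
  psi 0 = 1 /\ (forall x y, psi (x + y) = psi x * psi y) /\ exists x, psi x != 1.

(* Main.v *)
Require Import Defs.
From mathcomp Require Import all_boot all_order all_algebra all_field.
From mathcomp Require Import ring zify fingroup cyclic.
Import Order.TTheory GRing.Theory Num.Theory FinRing.Theory.
Local Open Scope ring_scope.

Section Char.
Variables (F : finFieldType) (psi : F -> algC).
Hypothesis Hpsi : nontriv_add_char psi.

Lemma psiD x y : psi (x + y) = psi x * psi y.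
Proof. by case: Hpsi => _ [H _]. Qed.
Lemma psi0 : psi 0 = 1.
Proof. by case: Hpsi. Qed.
Lemma psiN x : psi x * psi (- x) = 1.
Proof. by rewrite -psiD subrr psi0. Qed.
Lemma psi_neq0 x : psi x != 0.
Proof. by apply/eqP=> h; have := psiN x; rewrite h mul0r => /eqP; rewrite eq_sym oner_eq0. Qed.
Lemma psiMn x n : psi (x *+ n) = psi x ^+ n.
Proof. by elim: n => [|n IH]; rewrite ?mulr0n ?psi0 ?expr0 // mulrS psiD IH exprS. Qed.
Lemma cardF0 : (#|F|%:R : F) = 0.
Proof. by have := expg_cardG (G:=[set: F]) (in_setT (1 : F)); rewrite cardsT zmodXgE. Qed.
Lemma psi_norm x : `|psi x| = 1.
Proof.
have h : psi x ^+ #|F| = 1 by rewrite -psiMn -mulr_natr cardF0 mulr0 psi0.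
have : `|psi x| ^+ #|F| == 1 by rewrite -normrX h normr1.
have hc : (0 < #|F|)%N by apply/card_gt0P; exists 0.
by rewrite pexpr_eq1 // => /eqP.
Qed.
Lemma psi_conj x : (psi x)^* = psi (- x).
Proof.
have h1 : psi x * (psi x)^* = 1 by rewrite -normCK psi_norm expr1n.
apply: (mulfI (psi_neq0 x)); by rewrite h1 psiN.
Qed.

Lemma char_sum_beta n (beta : {poly_n F} -> F) :
  (forall y1 y2, beta (y1 + y2) = beta y1 + beta y2) ->
  (forall a y, beta (a *: y) = a * beta y) ->
  \sum_(y : {poly_n F}) psi (beta y) =
    if [forall y, beta y == 0] then #|{poly_n F}|%:R else 0.
Proof.
move=> bD bZ; case: ifP => [/forallP H|Hn].
  rewrite (eq_bigr (fun _ => 1)) => [|y _]; last by rewrite (eqP (H y)) psi0.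
  by rewrite sumr_const.
have [y0 Hy0] : exists y0, beta y0 != 0.
  by apply/existsP; rewrite -negb_forall Hn.
have [x0 Hx0] : exists x0, psi x0 != 1 by case: Hpsi => _ [_].
pose y1 := (x0 / beta y0) *: y0.
have b1 : beta y1 = x0 by rewrite bZ -mulrA mulVf // mulr1.
set S := \sum_y _.
have : S = S * psi x0.
  rewrite {1}/S (reindex_inj (addIr y1)) /= mulr_suml.
  by apply: eq_bigr => y _; rewrite bD psiD b1.
move/eqP; rewrite -subr_eq0 -{1}[S]mulr1 -mulrBr mulf_eq0 subr_eq0.
by rewrite [1 == _]eq_sym (negbTE Hx0) orbF => /eqP.
Qed.

Lemma weyl n (Phi D : {poly_n F} -> F) (beta : {poly_n F} -> {poly_n F} -> F) :
  (forall y t, Phi (y + t) = Phi y + D t + beta y t) ->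
  (forall t y1 y2, beta (y1 + y2) t = beta y1 t + beta y2 t) ->
  (forall t a y, beta (a *: y) t = a * beta y t) ->
  `|\sum_(y : {poly_n F}) psi (Phi y)| ^+ 2 <=
    #|{poly_n F}|%:R * #|[set t : {poly_n F} | [forall y, beta y t == 0]]|%:R.
Proof.
move=> HPhi bD bZ.
set S := \sum_y _.
have h2 : 0 <= `|S| ^+ 2 by rewrite exprn_ge0.
rewrite -(ger0_norm h2) normCK.
have -> : S^* = \sum_y psi (- Phi y).
  by rewrite /S rmorph_sum; apply: eq_bigr => y _; exact: psi_conj.
have E : S * \sum_y psi (- Phi y) =
   \sum_(t : {poly_n F}) psi (D t) *
     (if [forall y, beta y t == 0] then #|{poly_n F}|%:R else 0).
  rewrite /S mulr_suml (eq_bigr (fun x => \sum_y psi (Phi x) * psi (- Phi y))); last first.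
    by move=> x _; rewrite mulr_sumr.
  rewrite exchange_big /=.
  rewrite (eq_bigr (fun y => \sum_t psi (D t) * psi (beta y t))); last first.
    move=> y _; rewrite (reindex_inj (addrI y)) /=.
    apply: eq_bigr => t _; rewrite -psiD HPhi.
    by rewrite -psiD; congr psi; rewrite addrC !addrA addNr add0r.
  rewrite exchange_big /=; apply: eq_bigr => t _.
  by rewrite -mulr_sumr char_sum_beta.
rewrite E (le_trans (ler_norm_sum _ _ _)) //.
rewrite (eq_bigr (fun t => if t \in [set t : {poly_n F} | [forall y, beta y t == 0]]
                           then #|{poly_n F}|%:R else 0)); last first.
  move=> t _; rewrite inE normrM psi_norm mul1r.
  by case: ifP => _; rewrite ?normr0 // normr_nat.
by rewrite -big_mkcond /= sumr_const mulr_natr.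
Qed.
End Char.

Section Quad.
Variables (F : finFieldType) (m : nat) (c : 'I_m.+1 -> F).

Definition Qn n (f : {poly F}) :=
  \sum_(j < m.+1) c j * \sum_(j <= i < n) f`_i * f`_(i - j).
Definition Bn n (u v : {poly F}) :=
  \sum_(j < m.+1) c j * \sum_(j <= i < n) (u`_i * v`_(i - j) + v`_i * u`_(i - j)).

Lemma QA2_Qn n (f : {poly F}) : (size f <= n)%N -> QA2 c f = Qn n f.
Proof.
move=> Hn; apply: eq_bigr => j _; congr (_ * _).
rewrite (big_nat_widen _ _ _ _ _ Hn) big_mkcond [RHS]big_mkcond /=.
apply: eq_big_nat => i _; case: ltnP => // h.
by rewrite nth_default ?mul0r.
Qed.

Lemma QnD n u v : Qn n (u + v) = Qn n u + Qn n v + Bn n u v.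
Proof.
rewrite /Qn /Bn -!big_split; apply: eq_bigr => j _ /=.
rewrite -!mulrDr -!big_split; congr (_ * _); apply: eq_bigr => i _ /=.
rewrite !coefD; ring.
Qed.

Lemma BnDl n u w v : Bn n (u + w) v = Bn n u v + Bn n w v.
Proof.
rewrite /Bn -!big_split; apply: eq_bigr => j _ /=.
rewrite -!mulrDr -!big_split; congr (_ * _); apply: eq_bigr => i _ /=.
rewrite !coefD; ring.
Qed.

Lemma BnZl n a u v : Bn n (a *: u) v = a * Bn n u v.
Proof.
rewrite /Bn mulr_sumr; apply: eq_bigr => j _ /=.
rewrite mulr_sumr mulr_sumr mulr_sumr; apply: eq_bigr => i _ /=.
rewrite !coefZ; ring.
Qed.

Lemma BnC n u v : Bn n u v = Bn n v u.
Proof.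
rewrite /Bn; apply: eq_bigr => j _; congr (_ * _); apply: eq_bigr => i _.
by rewrite addrC.
Qed.

Lemma Bn0l n v : Bn n 0 v = 0.
Proof. by have := BnZl n 0 0 v; rewrite scale0r mul0r. Qed.


Lemma mul_nz (x y : F) : (x != 0 -> y != 0 -> False) -> x * y = 0.
Proof.
move=> H; have [->|hx] := eqVneq x 0; first by rewrite mul0r.
have [->|hy] := eqVneq y 0; first by rewrite mulr0.
by case: (H hx hy).
Qed.

Lemma sum_single (G : nat -> F) lo hi a0 : (lo <= a0 < hi)%N ->
  (forall a, (lo <= a < hi)%N -> a != a0 -> G a = 0) ->
  \sum_(lo <= a < hi) G a = G a0.
Proof.
move=> /andP[h1 h2] H.
rewrite (big_cat_nat (n:=a0)) //=; last exact: ltnW.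
rewrite [X in _ + X]big_ltn //.
rewrite [X in X + _]big_nat_cond [X in X + _]big1 ?add0r; last first.
  move=> a /andP[/andP[ha1 ha2] _]; apply: H; [apply/andP; split; lia | apply/eqP; lia].
rewrite big_nat_cond big1 ?addr0 // => a /andP[/andP[ha1 ha2] _]; apply: H;
  [apply/andP; split; lia | apply/eqP; lia].
Qed.

Variables (g : {poly F}) (k v : nat).
Hypothesis Hg : g \is monic.
Hypothesis Hsg : size g = k.+1.
Hypothesis Hv : g`_v != 0.
Hypothesis Hvlow : forall b, (b < v)%N -> g`_b = 0.

Lemma v_le_k : (v <= k)%N.
Proof.
rewrite -ltnS -Hsg; apply: contraR Hv; rewrite -leqNgt => h.
by rewrite nth_default.
Qed.

Lemma gX_nz i a : (g * 'X^i)`_a != 0 -> (i + v <= a)%N && (a <= i + k)%N.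
Proof.
rewrite coefMXn; case: ltnP => [_|h]; first by rewrite eqxx.
have [hl|hl] := ltnP (a - i) v; first by rewrite Hvlow ?eqxx.
have [hh|hh] := ltnP k (a - i).
  by rewrite nth_default ?eqxx // Hsg.
move=> _; apply/andP; lia.
Qed.

Lemma gX_coef i a : (i <= a)%N -> (g * 'X^i)`_a = g`_(a - i).
Proof. by move=> h; rewrite coefMXn ltnNge h. Qed.

Lemma g_top : g`_k = 1.
Proof. by have := monicP Hg; rewrite /lead_coef Hsg. Qed.

Definition dd := (m + k - v)%N.

Lemma entry_zero n i j : (i + dd < j)%N -> Bn n (g * 'X^i) (g * 'X^j) = 0.
Proof.
have hvk := v_le_k; rewrite /dd => hij.
apply: big1 => l _; have hl := ltn_ord l.
rewrite big_nat_cond big1 ?mulr0 // => a /andP[/andP[ha1 ha2] _].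
rewrite !mul_nz ?addr0 // => /gX_nz/andP[h1 h2] /gX_nz/andP[h3 h4]; lia.
Qed.

Lemma entry_diag n i : (i + m + k < n)%N ->
  Bn n (g * 'X^i) (g * 'X^(i + dd)) =
  c ord_max * ((if m == 0%N then g`_v else 0) + g`_v).
Proof.
have hvk := v_le_k; rewrite /dd => hn.
rewrite /Bn (bigD1 ord_max) //= [X in _ + X]big1 ?addr0; last first.
  move=> l /eqP hl; have hl' := ltn_ord l.
  have hlm : (l != m :> nat) by apply: contra_not_neq hl => h; apply: val_inj.
  rewrite big_nat_cond big1 ?mulr0 // => a /andP[/andP[ha1 ha2] _].
  rewrite !mul_nz ?addr0 // => /gX_nz/andP[h1 h2] /gX_nz/andP[h3 h4]; lia.
congr (_ * _); rewrite big_split /=; congr (_ + _).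
  case: eqP => hm.
    rewrite (@sum_single _ _ _ (i + k)%N); last 2 first.
    - apply/andP; lia.
    - move=> a /andP[ha1 ha2] hne.
      rewrite mul_nz // => /gX_nz/andP[h1 h2] /gX_nz/andP[h3 h4].
      by move/negP: hne; apply; apply/eqP; lia.
    rewrite gX_coef ?leq_addr // gX_coef; last by lia.
    have -> : (i + k - i = k)%N by lia.
    have -> : (i + k - m - (i + (m + k - v)) = v)%N by lia.
    by rewrite g_top mul1r.
  rewrite big_nat_cond big1 // => a /andP[/andP[ha1 ha2] _].
  rewrite mul_nz // => /gX_nz/andP[h1 h2] /gX_nz/andP[h3 h4].
  by apply: hm; lia.
rewrite (@sum_single _ _ _ (i + m + k)%N); last 2 first.
- apply/andP; lia.
- move=> a /andP[ha1 ha2] hne.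
  rewrite mul_nz // => /gX_nz/andP[h1 h2] /gX_nz/andP[h3 h4].
  by move/negP: hne; apply; apply/eqP; lia.
rewrite gX_coef; last by lia.
rewrite gX_coef; last by lia.
have -> : (i + m + k - (i + (m + k - v)) = v)%N by lia.
have -> : (i + m + k - m - i = k)%N by lia.
by rewrite g_top mulr1.
Qed.


Lemma size_gX i : (size (g * 'X^i)%R <= k + i + 1)%N.
Proof.
apply: leq_trans (size_mul_leq _ _) _; rewrite Hsg size_polyXn; lia.
Qed.

Lemma polar_entry N i j : (i <= N)%N -> (j <= N)%N ->
  polar (fun h => QA2 c (g * h)) 'X^i 'X^j = Bn (k + N).+1 (g * 'X^i) (g * 'X^j).
Proof.
move=> hi hj; rewrite /polar /= mulrDr.
have si := size_gX i; have sj := size_gX j.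
rewrite !(@QA2_Qn (k + N).+1).
- rewrite QnD; ring.
- by apply: leq_trans sj _; lia.
- by apply: leq_trans si _; lia.
- apply: leq_trans (size_polyD _ _) _; rewrite geq_max; apply/andP; split.
    by apply: leq_trans si _; lia.
  by apply: leq_trans sj _; lia.
Qed.

Hypothesis hcm : c ord_max != 0.
Hypothesis h2 : (2 : F) != 0.

Lemma diag_nz : c ord_max * ((if m == 0%N then g`_v else 0) + g`_v) != 0.
Proof.
rewrite mulf_neq0 //; case: ifP => _; last by rewrite add0r.
by rewrite -mulr2n -mulr_natr mulf_neq0.
Qed.

Lemma rank_sub (r1 r2 n1 n2 : nat) (f : 'I_r1 -> 'I_n1) (gc : 'I_r2 -> 'I_n2)
  (M : 'M[F]_(n1, n2)) : (\rank (mxsub f gc M) <= \rank M)%N.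
Proof.
rewrite -[M]mul1mx mxsub_mul -[M in mxsub id _ M]mulmx1 -mulmx_colsub.
apply: leq_trans (mxrankM_maxr _ _) _; rewrite mul1mx; exact: mxrankM_maxl.
Qed.

Lemma rank_bound N : (N.+1 - dd <= polar_rank_VN N (fun h => QA2 c (g * h)%R))%N.
Proof.
have hvk := v_le_k.
case: (leqP N.+1 dd) => hN.
  by move: hN; rewrite -subn_eq0 => /eqP ->.
set r := (N.+1 - dd)%N.
pose f : 'I_r -> 'I_N.+1 := fun i => inord i.
pose gc : 'I_r -> 'I_N.+1 := fun i => inord (i + dd).
rewrite /polar_rank_VN.
set M := \matrix_(i < N.+1, j < N.+1) _.
apply: (leq_trans _ (rank_sub _ _ _ _ f gc M)).
have Hr : forall i : 'I_r, (i + dd <= N)%N.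
  by move=> i; have := ltn_ord i; rewrite /r; lia.
rewrite mxrank_unit // unitmxE unitfE det_trig; last first.
  apply/is_trig_mxP => i j hij; rewrite !mxE /f /gc.
  have hi := Hr i; have hj := Hr j.
  rewrite !inordK ?(polar_entry N); try lia.
  apply: entry_zero; lia.
rewrite prodf_seq_neq0; apply/allP => i _ /=; rewrite !mxE /f /gc.
have hi := Hr i.
rewrite !inordK ?(polar_entry N); try lia.
rewrite entry_diag ?diag_nz //; rewrite /dd in hi; lia.
Qed.


Lemma BnNr n u w : Bn n u (- w) = - Bn n u w.
Proof. by rewrite BnC -scaleN1r BnZl BnC mulN1r. Qed.

Lemma Bn_sum_r n u N (t : {poly F}) :
  Bn n u (g * \sum_(b < N) t`_b *: 'X^b) = \sum_(b < N) t`_b * Bn n u (g * 'X^b).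
Proof.
rewrite BnC mulr_sumr; elim/big_rec2: _ => [|b x y _ IH]; first by rewrite Bn0l.
by rewrite BnDl IH -scalerAr BnZl BnC.
Qed.

Lemma npoly_sum N (t : {poly_N F}) : (t : {poly F}) = \sum_(b < N) t`_b *: 'X^b.
Proof.
rewrite -poly_def; apply/polyP => x; rewrite coef_poly.
by case: ltnP => // h; rewrite big_coef_npoly.
Qed.

Definition Ker N := [set t : {poly_N F} |
  [forall y : {poly_N F}, Bn (k + N).+1 (g * (y : {poly F})) (g * (t : {poly F})) == 0]].

Lemma Ker_zero N (t : {poly_N F}) : t \in Ker N ->
  (forall a, (a < dd)%N -> t`_a = 0) -> forall a, t`_a = 0.
Proof.
have hvk := v_le_k.
rewrite inE => /forallP Ht Hlow a; elim/ltn_ind: a => a IH.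
case: (ltnP a dd) => hd; first exact: Hlow.
case: (ltnP a N) => hN; last by rewrite big_coef_npoly.
pose i := (a - dd)%N.
have hiN : (i < N)%N by rewrite /i; lia.
have := Ht (npolyp N 'X^i); rewrite npolypK ?size_polyXn // => /eqP.
rewrite [X in Bn _ _ (g * X)]npoly_sum Bn_sum_r (bigD1 (Ordinal hN)) //= big1 ?addr0; last first.
  move=> b hb; case: (ltnP b a) => hba; first by rewrite IH // mul0r.
  have hba' : (a < b)%N by rewrite ltn_neqAle hba andbT; apply: contra hb => /eqP h; apply/eqP/val_inj.
  rewrite entry_zero ?mulr0 // /i; lia.
have -> : a = (i + dd)%N by rewrite /i; lia.
rewrite entry_diag; last by move: hd; rewrite /i /dd; lia.
by move/eqP; rewrite mulf_eq0 (negbTE diag_nz) orbF => /eqP.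
Qed.

Lemma card_Ker N : (#|Ker N| <= #|F| ^ dd)%N.
Proof.
pose f := fun t : {poly_N F} => [ffun x : 'I_dd => t`_x].
rewrite -(card_in_imset (f := f)); last first.
  move=> t1 t2 ht1 ht2 /ffunP Heq; apply/val_inj/polyP => a /=.
  apply/eqP; rewrite -subr_eq0 -coefB; apply/eqP.
  have hK : t1 - t2 \in Ker N.
    move: ht1 ht2; rewrite !inE => /forallP H1 /forallP H2; apply/forallP => y.
    by rewrite raddfB /= mulrBr BnC BnDl (BnC _ (g * t1)) (eqP (H1 y)) -scaleN1r BnZl (BnC _ (g * t2)) (eqP (H2 y)) mulr0 addr0.
  have H := @Ker_zero N (t1 - t2) hK.
  have := H _ a; rewrite raddfB /=; apply => b hb.
  by have := Heq (Ordinal hb); rewrite !ffunE /= coefB => E; rewrite E subrr.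
apply: leq_trans (max_card _) _; by rewrite card_ffun card_ord.
Qed.


Lemma sum_monic N (G : {poly F} -> algC) :
  \sum_(h : {poly_N.+1 F} | ((h : {poly F}) \is monic) && (size (h : {poly F}) == N.+1))
     G h = \sum_(y : {poly_N F}) G ('X^N + (y : {poly F})).
Proof.
pose hm (y : {poly_N F}) : {poly_N.+1 F} := npolyp N.+1 ('X^N + (y : {poly F})).
pose hi (p : {poly_N.+1 F}) : {poly_N F} := npolyp N ((p : {poly F}) - 'X^N).
have sXy : forall y : {poly_N F}, size ('X^N + (y : {poly F})) = N.+1.
  by move=> y; rewrite size_polyDl size_polyXn // ltnS size_npoly.
have hmE : forall y, (hm y : {poly F}) = 'X^N + (y : {poly F}).
  by move=> y; rewrite /hm npolypK // sXy.
have shi : forall p : {poly_N.+1 F}, (p : {poly F}) \is monic -> size (p : {poly F}) == N.+1 ->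
   (size ((p : {poly F}) - 'X^N)%R <= N)%N.
  move=> p hp /eqP hs; apply/leq_sizeP => j hj; rewrite coefB coefXn.
  case: (ltngtP j N) => hjN; first by lia.
  - by rewrite nth_default ?subr0 // hs.
  - by rewrite hjN; move: (monicP hp); rewrite /lead_coef hs /= => ->; rewrite subrr.
rewrite (reindex_onto hm hi); last first.
  move=> p /andP[hp hs]; apply/val_inj; rewrite /= hmE /hi npolypK ?shi //.
  by rewrite addrC subrK.
apply: eq_big => y; last by move=> _; rewrite hmE.
have -> : hi (hm y) = y.
  apply/val_inj; rewrite /hi /= hmE npolypK; first by rewrite addrAC subrr add0r.
  by rewrite addrAC subrr add0r size_npoly.
rewrite eqxx hmE sXy eqxx andbT /= monicE lead_coefDl ?lead_coefXn ?eqxx //.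
by rewrite size_polyXn ltnS size_npoly.
Qed.

Lemma two_nz (hq : odd #|F|) : (2 : F) != 0.
Proof.
apply/eqP => h; have := cardF0 F.
rewrite -(odd_double_half #|F|) hq natrD -muln2 natrM h mulr0 addr0 => /eqP.
by rewrite oner_eq0.
Qed.

Lemma part2 N (psi : F -> algC) (l : nat -> F) : nontriv_add_char psi ->
  `| \sum_(h : {poly_N.+1 F} | ((h : {poly F}) \is monic) && (size (h : {poly F}) == N.+1))
          psi (QA c (k + N) l (g * (h : {poly F}))) |
      <= 1 * (#|F|%:R) ^+ N / (sqrtC (#|F|%:R)) ^+ (N - (k + m)).
Proof.
move=> Hpsi.
rewrite (sum_monic N (fun p => psi (QA c (k + N) l (g * p)))).
set n0 := (k + N).+1.
pose Lf (f : {poly F}) := \sum_(i < n0) l i * f`_i.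
pose Phi (y : {poly_N F}) := QA c (k + N) l (g * ('X^N + (y : {poly F}))).
pose D (t : {poly_N F}) := Qn n0 (g * (t : {poly F})) + Bn n0 (g * 'X^N) (g * (t : {poly F}))
   + Lf (g * (t : {poly F})).
pose beta (y t : {poly_N F}) := Bn n0 (g * (y : {poly F})) (g * (t : {poly F})).
have sz : forall p : {poly F}, (size p <= N.+1)%N -> (size (g * p)%R <= n0)%N.
  move=> p hp; apply: leq_trans (size_mul_leq _ _) _; rewrite Hsg /n0; lia.
have szN : forall y : {poly_N F}, (size ('X^N + (y : {poly F}))%R <= N.+1)%N.
  move=> y; apply: leq_trans (size_polyD _ _) _; rewrite geq_max size_polyXn leqnn /=.
  exact: leq_trans (size_npoly y) _.
have LfD : forall u w, Lf (u + w) = Lf u + Lf w.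
  by move=> u w; rewrite /Lf -big_split; apply: eq_bigr => i _; rewrite coefD mulrDr.
have HPhi : forall y t : {poly_N F}, Phi (y + t) = Phi y + D t + beta y t.
  move=> y t; rewrite /Phi /D /beta /QA.
  rewrite !(QA2_Qn n0); try apply: sz; try apply: szN.
  have -> : (g * ('X^N + ((y + t : {poly_N F}) : {poly F}))) =
     (g * ('X^N + (y : {poly F}))) + g * (t : {poly F}) by rewrite raddfD /= !mulrDr addrA.
  rewrite QnD -/(Lf _) -/(Lf _) LfD mulrDr BnDl; ring.
have bD : forall t y1 y2, beta (y1 + y2) t = beta y1 t + beta y2 t.
  by move=> t y1 y2; rewrite /beta raddfD /= mulrDr BnDl.
have bZ : forall t a y, beta (a *: y) t = a * beta y t.
  by move=> t a y; rewrite /beta linearZ /= -scalerAr BnZl.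
have W := @weyl F psi Hpsi N Phi D beta HPhi bD bZ.
have HK : (#|[set t : {poly_N F} | [forall y, beta y t == 0%R]]| <= #|F| ^ (N - (N - (k + m))))%N.
  have hvk := v_le_k.
  case: (leqP N (k + m)) => hNk.
    have -> : (N - (N - (k + m)) = N)%N by lia.
    by rewrite -(card_npoly F N); apply: max_card.
  have -> : (N - (N - (k + m)) = k + m)%N by lia.
  apply: leq_trans (card_Ker N) _; apply: leq_pexp2l; first by apply/card_gt0P; exists 0.
  rewrite /dd; lia.
change (`|\sum_(y : {poly_N F}) psi (Phi y)| <= 1 * (#|F|%:R) ^+ N / (sqrtC (#|F|%:R)) ^+ (N - (k + m))).
move: W HK; set S := `|_|; set e := (N - (k + m))%N; set q := #|F| => W HK.
have q0 : (0 < q)%N by apply/card_gt0P; exists 0.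
have qR : (0 : algC) < q%:R by rewrite ltr0n.
have W2 : S ^+ 2 <= q%:R ^+ N * q%:R ^+ (N - e).
  apply: le_trans W _; rewrite card_npoly -/q -!natrX -!natrM ler_nat leq_mul2l HK orbT //.
have s0 : (0 : algC) < sqrtC q%:R by rewrite sqrtC_gt0.
rewrite mul1r ler_pdivlMr ?exprn_gt0 //.
rewrite -(@ler_pXn2r _ 2); last 3 first.
- by [].
- by rewrite nnegrE mulr_ge0 ?exprn_ge0 ?sqrtC_ge0 ?ler0n // /S normr_ge0.
- by rewrite nnegrE exprn_ge0 ?ler0n.
rewrite exprMn -exprM mulnC exprM sqrtCK -exprM.
apply: le_trans (ler_wpM2r _ W2) _; first by rewrite exprn_ge0 ?ler0n.
have he : (e <= N)%N by rewrite /e leq_subr.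
by rewrite -!exprD; have -> : (N + (N - e) + e = N * 2)%N by lia.
Qed.

End Quad.

Theorem lemma7p1 (F : finFieldType) (hq : odd #|F|)
    (m : nat) (c : 'I_m.+1 -> F) (hcm : c ord_max != 0) :
  (forall (k N : nat) (g : {poly F}), g \is monic -> size g = k.+1 ->
     (N.+1 - (k + m) <= polar_rank_VN N (fun h => QA2 c (g * h)))%N)
  /\
  exists C : algC, forall (k N : nat) (g : {poly F}) (psi : F -> algC) (l : nat -> F),
    g \is monic -> size g = k.+1 -> nontriv_add_char psi ->
    `| \sum_(h : {poly_N.+1 F} | ((h : {poly F}) \is monic) && (size (h : {poly F}) == N.+1))
          psi (QA c (k + N) l (g * (h : {poly F}))) |
      <= C * (#|F|%:R) ^+ N / (sqrtC (#|F|%:R)) ^+ (N - (k + m)).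
Proof.
have h2 := @two_nz F hq.
have getv : forall (k : nat) (g : {poly F}), g \is monic -> size g = k.+1 ->
    exists2 v, g`_v != 0 & forall b, (b < v)%N -> g`_b = 0.
  move=> k g Hg Hsg.
  have hk : g`_k != 0 by move: (monicP Hg); rewrite /lead_coef Hsg /= => ->; exact: oner_neq0.
  case: (ex_minnP (ex_intro (fun b => g`_b != 0) k hk)) => v Hv Hmin.
  exists v => // b hb; apply/eqP; apply: contraTT hb => h; rewrite -leqNgt; exact: Hmin.
split.
  move=> k N g Hg Hsg; have [v Hv Hvlow] := getv k g Hg Hsg.
  apply: (leq_trans _ (rank_bound _ _ _ _ _ _ Hg Hsg Hv Hvlow hcm h2 N)).
  rewrite /dd; lia.
exists 1 => k N g psi l Hg Hsg Hpsi; have [v Hv Hvlow] := getv k g Hg Hsg.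
exact: (part2 _ _ _ _ _ _ Hg Hsg Hv Hvlow hcm h2 N psi l Hpsi).
Qed.
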